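(* For every integer $t\ge 3$, the set $[3^t+11]$ admits a $3$-good partition. For $t\ge 4$ one such partition consists of the pairs $\{i,\ 3^t-i\}$ for $1\le i\le (3^t-1)/2$ with $i\notin\{3,9,12,13,14,15\}$, the singletons $\{3\}$ and $\{9\}$, the pairs $\{12,15\}$ and $\{13,14\}$, and the triples $\{3^t-3,3^t,3^t+3\}$, $\{3^t-9,3^t+1,3^t+8\}$, $\{3^t-12,3^t+5,3^t+7\}$, $\{3^t-13,3^t+2,3^t+11\}$, $\{3^t-14,3^t+4,3^t+10\}$, $\{3^t-15,3^t+6,3^t+9\}$.
   Context: A partition of $[n]=\{1,\dots,n\}$ into nonempty parts is called $3$-good if every part has at most $3$ elements and the sum of the elements of every part is a power of $3$, i.e. equals $3^s$ for some integer $s\ge 0$. *)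

(* Defs.v *)
From mathcomp Require Import all_boot.
Set Implicit Arguments. Unset Strict Implicit. Unset Printing Implicit Defensive.

Definition is_pow3 (m : nat) : Prop := exists s : nat, m = 3 ^ s.

(* A partition P of [n] = {1,...,n} (elements of 'I_n.+1 with value >= 1)
   into nonempty parts (MathComp's [partition] forbids the empty block),
   each part of size <= 3 with element sum a power of 3. *)
Definition three_good (n : nat) (P : {set {set 'I_n.+1}}) : Prop :=
  partition P [set i : 'I_n.+1 | 0 < val i] /\
  forall B, B \in P -> #|B| <= 3 /\ is_pow3 (\sum_(i in B) val i).

Definition explicit_parts (t : nat) : seq (seq nat) :=
  let q := 3 ^ t in
  [seq [:: i; q - i] | i <- iota 1 ((q - 1) %/ 2)
                     & i \notin [:: 3; 9; 12; 13; 14; 15]]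
  ++ [:: [:: 3]; [:: 9]; [:: 12; 15]; [:: 13; 14];
         [:: q - 3; q; q + 3];
         [:: q - 9; q + 1; q + 8];
         [:: q - 12; q + 5; q + 7];
         [:: q - 13; q + 2; q + 11];
         [:: q - 14; q + 4; q + 10];
         [:: q - 15; q + 6; q + 9]].

Definition explicit_partition (t : nat) : {set {set 'I_(3 ^ t + 11).+1}} :=
  [set B : {set 'I_(3 ^ t + 11).+1} |
     has (fun s => B == [set j : 'I_(3 ^ t + 11).+1 | val j \in s])
         (explicit_parts t)].

(* Main.v *)
Require Import Defs.
From mathcomp Require Import all_boot zify.

Lemma sum_setOf n (s : seq nat) (F : nat -> nat) :
  uniq s -> all (fun x => x < n.+1) s ->
  \sum_(j in [set j : 'I_n.+1 | val j \in s]) F (val j) = \sum_(x <- s) F x.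
Proof.
move=> us als.
rewrite (eq_bigl (fun j : 'I_n.+1 => val j \in s)); last by move=> j; rewrite inE.
rewrite -(big_mkord (fun x => x \in s) F) -big_filter.
apply: perm_big; apply: uniq_perm => //.
  by apply: filter_uniq; apply: iota_uniq.
move=> x; rewrite mem_filter mem_iota /=.
case xs: (x \in s) => //=.
by move/allP: als => /(_ x xs).
Qed.

Lemma count1_eq (T : eqType) (p : pred T) (l : seq T) x y :
  count p l <= 1 -> x \in l -> y \in l -> p x -> p y -> x = y.
Proof.
elim: l => //= a l IH c.
rewrite !inE => /orP[/eqP->|xl] /orP[/eqP->|yl] px py //.
- have : 0 < count p l by rewrite -has_count; apply/hasP; exists y.
  by move: c; rewrite px /=; lia.
- have : 0 < count p l by rewrite -has_count; apply/hasP; exists x.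
  by move: c; rewrite py /=; lia.
- apply: IH => //; by move: c; case: (p a) => //= c; lia.
Qed.

Lemma good_of_parts n (parts : seq (seq nat)) :
  all (fun s => (0 < size s <= 3) && uniq s && all (fun x => 0 < x <= n) s) parts ->
  (forall s, s \in parts -> is_pow3 (sumn s)) ->
  (forall x, 0 < x <= n -> count (fun s => x \in s) parts = 1) ->
  three_good [set B : {set 'I_n.+1} |
     has (fun s => B == [set j : 'I_n.+1 | val j \in s]) parts].
Proof.
move=> /allP Hp Hpow Hc.
have sumE s F : s \in parts ->
  \sum_(j in [set j : 'I_n.+1 | val j \in s]) F (val j) = \sum_(x <- s) F x.
  move=> /Hp /andP[/andP[_ us] als]; apply: sum_setOf => //.
  by apply/allP => x /(allP als) /andP[_]; rewrite ltnS.
have memP (B : {set 'I_n.+1}) :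
   B \in [set B : {set 'I_n.+1} | has (fun s => B == [set j : 'I_n.+1 | val j \in s]) parts]
   -> exists2 s, s \in parts & B = [set j : 'I_n.+1 | val j \in s].
  by rewrite inE => /hasP[s sp /eqP->]; exists s.
split.
- apply/and3P; split.
  + apply/eqP/setP => x; rewrite inE.
    apply/bigcupP/idP.
    * case=> B /memP [s sp ->]; rewrite inE => xs.
      by have /andP[_ /allP /(_ _ xs) /andP[]] := Hp s sp.
    * move=> x0.
      have : 0 < count (fun s => val x \in s) parts.
        by rewrite Hc // x0 -ltnS ltn_ord.
      rewrite -has_count => /hasP[s sp xs].
      exists [set j : 'I_n.+1 | val j \in s]; last by rewrite inE.
      by rewrite inE; apply/hasP; exists s.
  + apply/trivIsetP => A B /memP[s sp ->] /memP[s' sp' ->] neq.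
    rewrite -setI_eq0; apply/eqP/setP => x; rewrite !inE.
    apply/negP => /andP[xs xs'].
    have xr : 0 < val x <= n.
      by have /andP[_ /allP /(_ _ xs)] := Hp s sp.
    have E := @count1_eq _ (fun s : seq nat => val x \in s) parts s s' (eq_leq (Hc _ xr)) sp sp' xs xs'.
    by rewrite E eqxx in neq.
  + apply/negP => /memP[s sp] /esym/setP E.
    have /andP[/andP[/andP[sz _] _] als] := Hp s sp.
    case: s sz als sp E => // a s _ /= /andP[/andP[_ an] _] sp E.
    by have := E (inord a); rewrite !inE inordK ?ltnS // eqxx.
- move=> B /memP[s sp ->]; split.
  + rewrite -sum1_card (sumE s (fun _ => 1)) // sum1_size.
    by have /andP[/andP[/andP[_ ->] _] _] := Hp s sp.
  + by rewrite (sumE s id) // -sumnE; apply: Hpow.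
Qed.
Lemma count_eq_iota y b a k :
  count (fun i => (i == y) && b) (iota a k) = (a <= y < a + k) && b.
Proof.
case: b => /=.
  rewrite andbT -mem_iota -(count_uniq_mem y (iota_uniq a k)).
  by apply: eq_count => i; rewrite andbT.
by rewrite andbF (@eq_count _ _ pred0) ?count_pred0 // => i; rewrite andbF.
Qed.

Lemma count_L (q x : nat) (E : seq nat) m :
  m.*2 < q ->
  count (fun s => x \in s)
    [seq [:: i; q - i] | i <- iota 1 m & i \notin E]
  = ((1 <= x < 1 + m) && (x \notin E)) + ((1 <= q - x < 1 + m) && (q - x \notin E)).
Proof.
move=> mq.
rewrite count_map count_filter -!count_eq_iota.
rewrite -count_predUI.
have -> : count (predI (fun i => (i == x) && (x \notin E))
               (fun i => (i == q - x) && (q - x \notin E))) (iota 1 m) = 0.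
  rewrite (@eq_in_count _ _ pred0) ?count_pred0 // => i; rewrite mem_iota => /andP[i1 i2] /=.
  case: (i =P x) => [ix|ix]; case: (i =P q - x) => [iqx|iqx] /=; rewrite ?andbF //; lia.
rewrite addn0; apply: eq_in_count => i; rewrite mem_iota => /andP[i1 i2] /=.
rewrite !inE.
have -> : (x == q - i) = (i == q - x) by apply/eqP/eqP; lia.
case: (i =P x) => [ix|ix]; case: (i =P q - x) => [iqx|iqx] /=; rewrite ?andbF ?orbF ?orbT //=; try lia.
  by rewrite ix eqxx.
by rewrite iqx.
Qed.

Ltac decide_bools :=
  repeat match goal with
  | |- context [?a == ?b] =>
      first [ rewrite (_ : (a == b) = false); last (apply/eqP; lia)
            | rewrite (_ : (a == b) = true); last (apply/eqP; lia) ]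
  | |- context [?a <= ?b] =>
      first [ rewrite (_ : (a <= b) = false); last (apply/negbTE/negP; lia)
            | rewrite (_ : (a <= b) = true); last (by lia) ]
  end.

Lemma part2 t : 4 <= t -> three_good (explicit_partition t).
Proof.
move=> t4; rewrite /explicit_partition /explicit_parts.
set q := 3 ^ t.
have q81 : 81 <= q by rewrite /q (_ : 81 = 3 ^ 4) // leq_pexp2l.
have qodd : odd q by rewrite /q oddX orbT.
have qh := odd_double_half q; rewrite qodd in qh.
set m := (q - 1) %/ 2.
have qm : q = m.*2.+1 by rewrite /m; lia.
apply: good_of_parts.
{ rewrite all_cat; apply/andP; split.
  { apply/allP => s /mapP[i]; rewrite mem_filter mem_iota => /andP[_ /andP[i1 i2]] ->.
    rewrite /= inE; lia. }
  rewrite /= !inE; lia. }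
{ move=> s; rewrite mem_cat => /orP[].
  { move=> /mapP[i]; rewrite mem_filter mem_iota => /andP[_ /andP[i1 i2]] ->.
    by exists t; rewrite /= -/q; lia. }
  rewrite !inE.
  do ![move/orP=>[/eqP->|]]; last move/eqP->;
  try by [exists 1 | exists 2 | exists 3];
  exists t.+1; rewrite expnS; fold q; rewrite /=; lia. }
move=> x xr; rewrite count_cat count_L; last lia.
rewrite /= !inE.
have m40 : 40 <= m by lia.
clear qh qodd q81; clearbody m q; clear t4.
have [h1|h1] := leqP x 15.
  decide_bools; lia.
have [h2|h2] := leqP x m.
  decide_bools; by [].
have [h3|h3] := ltnP x (q - 15).
  decide_bools; by [].
have [h4|h4] := ltnP x q.
  have: q - x \in iota 1 15 by rewrite mem_iota; lia.
  rewrite !inE; do ![move/orP=>[/eqP e|]]; last move/eqP=> e;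
  decide_bools; by [].
have: x - q \in iota 0 12 by rewrite mem_iota; lia.
rewrite !inE; do ![move/orP=>[/eqP e|]]; last move/eqP=> e;
decide_bools; by [].
Qed.

Definition parts3 : seq (seq nat) :=
  [:: [:: 38; 37; 6]; [:: 36; 35; 10]; [:: 34; 30; 17]; [:: 33; 29; 19];
      [:: 32; 28; 21]; [:: 31; 26; 24]; [:: 27]; [:: 25; 2]; [:: 23; 4];
      [:: 22; 5]; [:: 20; 7]; [:: 18; 9]; [:: 16; 11]; [:: 15; 12];
      [:: 14; 13]; [:: 8; 1]; [:: 3]].

Lemma part1_3 : exists P : {set {set 'I_(3 ^ 3 + 11).+1}}, three_good P.
Proof.
eexists; apply: (@good_of_parts (3 ^ 3 + 11) parts3).
- by [].
- move=> s sp.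
  have /allP /(_ s sp) : all (fun s => sumn s \in [:: 1; 3; 9; 27; 81]) parts3 by [].
  rewrite !inE => /orP[/eqP->|/orP[/eqP->|/orP[/eqP->|/orP[/eqP->|/eqP->]]]].
  + by exists 0.
  + by exists 1.
  + by exists 2.
  + by exists 3.
  + by exists 4.
- move=> x xr.
  have /allP /(_ x) : all (fun x => count (fun s => x \in s) parts3 == 1) (iota 1 38) by [].
  by rewrite mem_iota => /(_ _)/eqP; apply; rewrite (_ : 3 ^ 3 + 11 = 38) in xr; lia.
Qed.

Theorem mainTheorem12 :
  (forall t : nat, 3 <= t ->
     exists P : {set {set 'I_(3 ^ t + 11).+1}}, three_good P) /\
  (forall t : nat, 4 <= t -> three_good (explicit_partition t)).
Proof.
split; last exact: part2.
move=> t; rewrite leq_eqVlt => /orP[/eqP<-|t4]; first exact: part1_3.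
by exists (explicit_partition t); apply: part2.
Qed.
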